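(* Let $\Gamma=(I,E)$ be a finite quiver, $\alpha\ge1$, and $x\in\mathrm{Rep}_\alpha(\Gamma)$. Then the stabilizer of $x$ in $G_\alpha$ has cardinality $$|\mathrm{Aut}(x)|=(q-1)^{c(\Gamma_{\alpha,x})}\,q^{\sum_{k=1}^{\alpha-1}c(\Gamma_{k,x})}.$$
   Context: $F$ local field with ring of integers $\mathcal O$, maximal ideal $\mathfrak m=(\pi)$, residue field of size $q$; $\mathcal O_\alpha=\mathcal O/\mathfrak m^\alpha$, and the absolute value of an element of $\mathcal O_\alpha$ is that of any lift to $\mathcal O$ (so $|0|=0$ in $\mathcal O_\alpha$ is consistent: $|y|\le q^{-\alpha}$ iff $y=0$). $\mathrm{Rep}_\alpha(\Gamma)=\mathcal O_\alpha^E$ (representations with dimension vector $(1,\dots,1)$); $G_\alpha=(\mathcal O_\alpha^\times)^I$ acts by $(g\cdot x)_e=g_{t(e)}x_eg_{s(e)}^{-1}$; $\mathrm{Aut}(x)$ is the stabilizer. For $1\le k\le\alpha$, $\Gamma_{k,x}$ is the graph with vertex set $I$ and edge set $\{e\in E:|x_e|>q^{-k}\}$; $c(\cdot)$ denotes the number of connected components. *)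

(* Defs.v *)
From HB Require Import structures.
From mathcomp Require Import all_boot all_order all_algebra.
Set Implicit Arguments. Unset Strict Implicit. Unset Printing Implicit Defensive.
Import Order.TTheory GRing.Theory Num.Theory.
Local Open Scope ring_scope.

(* The truncated ring O_alpha = O / m^alpha.                           *)
(* We model it abstractly as a finite commutative ring R with an      *)
(* element pi (the image of a uniformizer) such that                  *)
(*  - every non-unit is a multiple of pi (so R is local with maximal  *)
(*    ideal (pi)),                                                    *)
(*  - the residue field R/(pi) has exactly q elements.                *)

Definition is_Oalpha (R : finComUnitRingType) (pi : R) (alpha q : nat) : Prop :=
  [/\ pi ^+ alpha = 0,
      pi ^+ alpha.-1 != 0,
      (forall y : R, y \notin GRing.unit -> exists z : R, y = pi * z)
    & (#|[set y : R | [exists z : R, y == (pi * z)%R]]| * q = #|R|)%N].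

Definition val_alpha (R : finComUnitRingType) (pi : R) (alpha : nat) (y : R) : nat :=
  (\max_(k < alpha.+1 | [exists z : R, y == (pi ^+ k * z)%R]) (k : nat))%N.

Definition absv (R : finComUnitRingType) (pi : R) (alpha q : nat) (y : R) : rat :=
  if y == 0 then 0 else ((q%:R : rat) ^- (val_alpha pi alpha y)).

(* Representations of dimension vector (1,...,1): x : {ffun E -> R}.  *)

Definition gamma_adj (I E : finType) (src tgt : E -> I)
    (R : finComUnitRingType) (pi : R) (alpha q : nat) (x : {ffun E -> R})
    (k : nat) : rel I :=
  fun i j => [exists e : E,
      ((q%:R : rat) ^- k < absv pi alpha q (x e)) &&
      (((src e == i) && (tgt e == j)) || ((src e == j) && (tgt e == i)))].

Definition n_comp_gamma (I E : finType) (src tgt : E -> I)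
    (R : finComUnitRingType) (pi : R) (alpha q : nat) (x : {ffun E -> R})
    (k : nat) : nat :=
  n_comp (gamma_adj src tgt pi alpha q x k) (predT : {pred I}).

Definition Aut_x (I E : finType) (src tgt : E -> I)
    (R : finComUnitRingType) (x : {ffun E -> R}) : {set {ffun I -> {unit R}}} :=
  [set g : {ffun I -> {unit R}} |
     [forall e : E, val (g (tgt e)) * x e * (val (g (src e)))^-1 == x e]].

(* Main.v *)
Require Import Defs.
From HB Require Import structures.
From mathcomp Require Import all_boot all_order all_algebra.
Import Order.TTheory GRing.Theory Num.Theory.
Set Implicit Arguments. Unset Strict Implicit. Unset Printing Implicit Defensive.
Local Open Scope ring_scope.
Lemma card_fibers (T U : finType) (A : {set T}) (B : {set U}) (f : T -> U) m :
  (forall a, a \in A -> f a \in B) ->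
  (forall b, b \in B -> #|[set a in A | f a == b]| = m) -> #|A| = (#|B| * m)%N.
Proof.
move=> fAB fib.
rewrite -sum1_card (partition_big f (mem B)) //= -sum_nat_const.
apply: eq_bigr => b hb; rewrite -(fib b hb) -sum1_card.
by apply: eq_bigl => a; rewrite inE.
Qed.
Lemma card_trans (R : finZmodType) (A : {set R}) (c : R) :
  #|[set z | z - c \in A]| = #|A|.
Proof.
rewrite -(card_imset _ (addIr c)); apply: eq_card => z; rewrite inE.
apply/idP/imsetP => [h|[w hw ->]]; last by rewrite addrK.
by exists (z - c) => //; rewrite subrK.
Qed.

Section Ring.
Variables (R : finComUnitRingType) (pi : R) (alpha q : nat).
Hypothesis halpha : (1 <= alpha)%N.
Hypothesis hR : is_Oalpha pi alpha q.
Local Open Scope ring_scope.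

Definition Pk k : {set R} := [set y | [exists z, y == pi ^+ k * z]].

Lemma PkP k y : reflect (exists z, y = pi ^+ k * z) (y \in Pk k).
Proof. rewrite inE; apply: (iffP existsP) => [[z /eqP ->]|[z ->]]; by exists z. Qed.

Lemma Pk0 y : y \in Pk 0.
Proof. by apply/PkP; exists y; rewrite expr0 mul1r. Qed.

Lemma Pk_0 k : 0 \in Pk k.
Proof. by apply/PkP; exists 0; rewrite mulr0. Qed.

Lemma PkD k a b : a \in Pk k -> b \in Pk k -> a + b \in Pk k.
Proof. by move=> /PkP[x ->] /PkP[y ->]; apply/PkP; exists (x + y); rewrite mulrDr. Qed.

Lemma PkN k a : a \in Pk k -> - a \in Pk k.
Proof. by move=> /PkP[x ->]; apply/PkP; exists (- x); rewrite mulrN. Qed.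

Lemma PkB k a b : a \in Pk k -> b \in Pk k -> a - b \in Pk k.
Proof. by move=> ha hb; apply: PkD => //; apply: PkN. Qed.

Lemma PkM k a c : a \in Pk k -> a * c \in Pk k.
Proof. by move=> /PkP[x ->]; apply/PkP; exists (x * c); rewrite mulrA. Qed.

Lemma Pk_le m k : (m <= k)%N -> forall y, y \in Pk k -> y \in Pk m.
Proof.
move=> hmk y /PkP[z ->]; apply/PkP; exists (pi ^+ (k - m) * z).
by rewrite mulrA -exprD subnKC.
Qed.

Lemma pialpha : pi ^+ alpha = 0. Proof. by case: hR. Qed.

Lemma Pk_alpha y : (y \in Pk alpha) = (y == 0).
Proof.
apply/idP/eqP => [/PkP[z ->]|->]; last exact: Pk_0.
by rewrite pialpha mul0r.
Qed.

Lemma pik_neq0 k : (k < alpha)%N -> pi ^+ k != 0.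
Proof.
move=> hk; apply/negP => /eqP hk0.
case: hR => _ h1 _ _; move/negP: h1; apply.
by rewrite -(subnKC (_ : k <= alpha.-1)%N) ?exprD ?hk0 ?mul0r // -ltnS prednK // (leq_ltn_trans _ hk).
Qed.

Lemma pi_nonunit : pi \notin GRing.unit.
Proof.
apply/negP => hu; have := unitrX alpha hu.
by rewrite pialpha unitr0.
Qed.

Lemma nonunit_Pk1 y : y \notin GRing.unit -> y \in Pk 1.
Proof. case: hR => _ _ h _ /h[z ->]; apply/PkP; exists z; by rewrite expr1. Qed.

Lemma unit_nPk1 u : u \is a GRing.unit -> u \notin Pk 1.
Proof.
move=> hu; apply/negP => /PkP[z hz]; move: hu; rewrite hz expr1 unitrM.
by rewrite (negbTE pi_nonunit).
Qed.

Lemma Pk1_unit y : (y \in Pk 1) = (y \notin GRing.unit).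
Proof.
apply/idP/idP; last exact: nonunit_Pk1.
by apply: contraL => /unit_nPk1.
Qed.

Lemma unitD u d : u \is a GRing.unit -> d \in Pk 1 -> u + d \is a GRing.unit.
Proof.
move=> hu hd; apply/negPn/negP => /nonunit_Pk1 h.
by move: (unit_nPk1 hu); rewrite -(addrK d u) PkB.
Qed.

Definition vl y := val_alpha pi alpha y.

Lemma vl_spec y : [/\ (vl y <= alpha)%N, y \in Pk (vl y) &
   forall k, (k <= alpha)%N -> y \in Pk k -> (k <= vl y)%N].
Proof.
rewrite /vl /val_alpha.
have P0 : [exists z : R, y == pi ^+ (@ord0 alpha) * z].
  by apply/existsP; exists y; rewrite expr0 mul1r.
split.
- by apply/bigmax_leqP => i _; rewrite -ltnS.
- rewrite (@bigop.bigmax_eq_arg _ ord0 (fun k : 'I_alpha.+1 => [exists z : R, y == pi ^+ k * z]) (fun k => (k:nat)) P0).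
  case: (@arg_maxnP _ ord0 (fun k : 'I_alpha.+1 => [exists z : R, y == pi ^+ k * z]) (fun k => (k:nat)) P0) => i Pi _.
  by rewrite inE.
- move=> k hk hy.
  apply: (leq_bigmax_cond (F := fun k : 'I_alpha.+1 => (k : nat)) (Ordinal (hk : (k < alpha.+1)%N))).
  by move: hy; rewrite inE.
Qed.

Lemma vl0 : vl 0 = alpha.
Proof.
case: (vl_spec 0) => h1 _ h3; apply/eqP; rewrite eqn_leq h1 h3 //.
by rewrite Pk_alpha.
Qed.

Lemma vl_dec y : y != 0 ->
  (vl y < alpha)%N /\ exists2 u, u \is a GRing.unit & y = pi ^+ vl y * u.
Proof.
move=> hy; case: (vl_spec y) => h1 /PkP[w hw] h3.
have hlt : (vl y < alpha)%N.
  rewrite ltn_neqAle h1 andbT; apply/eqP => he.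
  by move: hy; rewrite hw he pialpha mul0r eqxx.
split => //; exists w => //; apply/negPn/negP => /nonunit_Pk1/PkP[w' hw'].
suff : ((vl y).+1 <= vl y)%N by rewrite ltnn.
apply: h3 => //.
by apply/PkP; exists w'; rewrite {1}hw hw' expr1 mulrA -exprSr.
Qed.

Lemma ann y d : (d * y == 0) = (d \in Pk (alpha - vl y)).
Proof.
case: (vl_spec y) => h1 hy _.
apply/eqP/idP => [hdy|/PkP[z ->]]; last first.
  case/PkP: hy => w hw; rewrite [X in _ * X = _]hw.
  by rewrite mulrCA !mulrA -exprD subnKC // pialpha !mul0r.
have [->|y0] := eqVneq y 0; first by rewrite vl0 subnn Pk0.
case: (vl_dec y0) => hlt [u hu hyu].
have hdp : d * pi ^+ vl y = 0.
  by rewrite -(mulrK hu (d * pi ^+ vl y)) -(mulrA d) -hyu hdy mul0r.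
have [->|d0] := eqVneq d 0; first exact: Pk_0.
case: (vl_dec d0) => hlt' [u' hu' hdu].
have hge : (alpha <= vl d + vl y)%N.
  rewrite leqNgt; apply/negP => hl.
  move: (pik_neq0 hl); rewrite exprD; apply/negP; rewrite negbK.
  apply/eqP; rewrite -(mulrK hu' (pi ^+ vl d * pi ^+ vl y)) (mulrAC (pi ^+ vl d)).
  by rewrite -hdu hdp mul0r.
case: (vl_spec d) => _ hd _; apply: (Pk_le _ hd).
by rewrite leq_subLR addnC.
Qed.


Definition Kk k : {set R} := [set z | pi ^+ k * z == 0].

Lemma card_R_Pk k : #|[set: R]| = (#|Pk k| * #|Kk k|)%N.
Proof.
apply: (card_fibers (f := fun z => pi ^+ k * z)).
  by move=> a _; apply/PkP; exists a.
move=> b /PkP[z0 ->].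
rewrite -(card_trans (Kk k) z0); apply: eq_card => z; rewrite !inE.
by rewrite mulrBr subr_eq0.
Qed.

Lemma Kk_Pk1 k : (k < alpha)%N -> forall z, z \in Kk k -> z \in Pk 1.
Proof.
move=> hk z; rewrite inE => /eqP hz; apply: nonunit_Pk1; apply/negP => hu.
by move: (pik_neq0 hk); rewrite -(mulrK hu (pi ^+ k)) hz mul0r eqxx.
Qed.

Lemma card_Pk1_Pk k : (k < alpha)%N -> #|Pk 1| = (#|Pk k.+1| * #|Kk k|)%N.
Proof.
move=> hk.
apply: (card_fibers (f := fun z => pi ^+ k * z)).
  by move=> a /PkP[w ->]; apply/PkP; exists w; rewrite mulrA -exprSr.
move=> b /PkP[w ->].
have hz0 : pi * w \in Pk 1 by apply/PkP; exists w; rewrite expr1.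
rewrite -(card_trans (Kk k) (pi * w)); apply: eq_card => z; rewrite !inE.
rewrite mulrBr subr_eq0 mulrA -exprSr.
apply/andP/idP => [[_ ->]//|h]; split => //.
suff : z \in Pk 1 by rewrite inE.
rewrite -(subrK (pi * w) z); apply: PkD => //.
by apply: (Kk_Pk1 hk); rewrite inE mulrBr subr_eq0 mulrA -exprSr.
Qed.

Lemma card_R_Pk1 : #|[set: R]| = (q * #|Pk 1|)%N.
Proof.
case: hR => _ _ _ h; rewrite cardsT -h mulnC; congr (_ * _)%N.
Qed.

Lemma card_Pk_step k : (k < alpha)%N -> #|Pk k| = (q * #|Pk k.+1|)%N.
Proof.
move=> hk; have hK : (0 < #|Kk k|)%N by apply/card_gt0P; exists 0; rewrite inE mulr0.
apply/eqP; rewrite -(eqn_pmul2r hK) -card_R_Pk -mulnA -card_Pk1_Pk //.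
by rewrite card_R_Pk1.
Qed.

Lemma Pk_gt0 k : (0 < #|Pk k|)%N.
Proof. by apply/card_gt0P; exists 0; exact: Pk_0. Qed.

Lemma q_gt1 : (1 < q)%N.
Proof.
have h := card_R_Pk1; have hlt : (#|Pk 1| < #|[set: R]|)%N.
  apply: proper_card; rewrite properT; apply/negP => /eqP hP.
  by move: (unit_nPk1 (unitr1 R)); rewrite hP inE.
move: hlt; rewrite h -{1}(mul1n #|Pk 1|) ltn_pmul2r //; exact: Pk_gt0.
Qed.

Definition eqm k a b := a - b \in Pk k.

Lemma eqm_refl k a : eqm k a a.
Proof. by rewrite /eqm subrr Pk_0. Qed.

Lemma eqm_sym k a b : eqm k a b -> eqm k b a.
Proof. by rewrite /eqm => /PkN; rewrite opprB. Qed.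

Lemma eqm_trans k a b c : eqm k a b -> eqm k b c -> eqm k a c.
Proof. by rewrite /eqm => h1 h2; rewrite -(subrKA b) PkD. Qed.

Lemma eqm_le m k a b : (m <= k)%N -> eqm k a b -> eqm m a b.
Proof. by move=> h; apply: Pk_le. Qed.

Lemma eqm_alpha a b : eqm alpha a b -> a = b.
Proof. by rewrite /eqm Pk_alpha subr_eq0 => /eqP. Qed.

Lemma eqm0 a b : eqm 0 a b.
Proof. exact: Pk0. Qed.

Definition rep k y := odflt y [pick z | eqm k y z].

Lemma rep_eqm k y : eqm k y (rep k y).
Proof. by rewrite /rep; case: pickP => [z hz|h] //=; apply: eqm_refl. Qed.

Lemma rep_eq k a b : eqm k a b -> rep k a = rep k b.
Proof.
move=> hab; rewrite /rep (@eq_pick _ (fun z => eqm k a z) (fun z => eqm k b z)).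
  case: pickP => // h; by have := h b; rewrite eqm_refl.
move=> z /=; apply/idP/idP => h.
  by apply: eqm_trans h; apply: eqm_sym.
by apply: eqm_trans h.
Qed.

Lemma rep_rep k y : rep k (rep k y) = rep k y.
Proof. by apply: rep_eq; apply: eqm_sym; apply: rep_eqm. Qed.

Lemma canon_eq k a b : rep k a = a -> rep k b = b -> eqm k a b -> a = b.
Proof. by move=> ha hb /rep_eq; rewrite ha hb. Qed.

Lemma rep_alpha y : rep alpha y = y.
Proof. by apply/esym/eqm_alpha; apply: rep_eqm. Qed.

Lemma unit_eqm1 a b : a \is a GRing.unit -> eqm 1 a b -> b \is a GRing.unit.
Proof.
move=> ha hab; rewrite -(subrK a b) addrC; apply: unitD => //.
by apply: eqm_sym.
Qed.

Definition U1 : {set R} := [set z | (rep 1 z == z) && (z \is a GRing.unit)].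

Lemma card_U1 : #|U1| = (q - 1)%N.
Proof.
have e : #|[set z : R | z \is a GRing.unit]| = (#|U1| * #|Pk 1|)%N.
  apply: (card_fibers (f := rep 1)).
    move=> a; rewrite !inE rep_rep eqxx /= => ha.
    by apply: unit_eqm1 ha (rep_eqm _ _).
  move=> c; rewrite inE => /andP[/eqP hc hcu].
  rewrite -(card_trans (Pk 1) c); apply: eq_card => z; rewrite [in RHS]inE -/(eqm 1 z c) !inE.
  apply/andP/idP => [[hz /eqP <-]|h]; first exact: rep_eqm.
  split; first by apply: unit_eqm1 hcu (eqm_sym h).
  by rewrite (rep_eq h) hc.
have e2 : #|[set z : R | z \is a GRing.unit]| = (#|[set: R]| - #|Pk 1|)%N.
  rewrite cardsT -(cardsC (Pk 1)) addKn; apply: eq_card => z; rewrite in_setC Pk1_unit negbK inE.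
  done.
move: e; rewrite e2 card_R_Pk1 -{2}(mul1n #|Pk 1|) -mulnBl => /eqP.
by rewrite eqn_pmul2r ?Pk_gt0 // => /eqP.
Qed.

Definition Cset j y : {set R} := [set z | (rep j.+1 z == z) && eqm j z y].

Lemma card_Cset j y : (j < alpha)%N -> #|Cset j y| = q.
Proof.
move=> hj.
have e : #|[set z | eqm j z y]| = (#|Cset j y| * #|Pk j.+1|)%N.
  apply: (card_fibers (f := rep j.+1)).
    move=> a; rewrite !inE rep_rep eqxx /= => ha.
    apply: eqm_trans ha; apply: eqm_sym; apply: (eqm_le (leqnSn j)).
    exact: rep_eqm.
  move=> c; rewrite inE => /andP[/eqP hc hcy].
  rewrite -(card_trans (Pk j.+1) c); apply: eq_card => z; rewrite [in RHS]inE -/(eqm j.+1 z c) !inE.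
  apply/andP/idP => [[hz /eqP <-]|h]; first exact: rep_eqm.
  split; first by apply: eqm_trans hcy; apply: (eqm_le (leqnSn j)).
  by rewrite (rep_eq h) hc.
move: e; rewrite (card_trans (Pk j)) (card_Pk_step hj) => /eqP.
by rewrite eqn_pmul2r ?Pk_gt0 // => /eqP.
Qed.

End Ring.
Lemma foldr_const (T : Type) (s : seq T) (F : T -> nat) m : (forall x, F x = m) ->
  foldr muln 1 [seq F x | x <- s] = (m ^ size s)%N.
Proof. move=> h; elim: s => //= x s ->; by rewrite h expnS. Qed.

Lemma card_comp (I T : finType) (e : rel I) (C : I -> {set T}) m :
  connect_sym e -> (forall i j, e i j -> C i = C j) -> (forall i, #|C i| = m) ->
  #|[set g : {ffun I -> T} | [forall i, g i \in C i] &&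
       [forall i, forall j, e i j ==> (g i == g j)]]| = (m ^ n_comp e predT)%N.
Proof.
move=> sym hC hm.
pose S' := {x : I | roots e x}.
pose F := fun s : S' => C (val s).
have rr i : roots e (fingraph.root e i) by exact: roots_root.
pose psi := fun f : {ffun S' -> T} => [ffun i => f (exist _ (fingraph.root e i) (rr i))].
have Croot i : C (fingraph.root e i) = C i.
  have cl : closed e [pred y | C y == C i].
    by move=> x y /hC hxy; rewrite !inE hxy.
  by apply/eqP; have := closed_connect cl (connect_root e i); rewrite !inE eqxx.
have setE : [set g : {ffun I -> T} | [forall i, g i \in C i] &&
       [forall i, forall j, e i j ==> (g i == g j)]] = psi @: family F.
  apply/setP => g; rewrite inE; apply/idP/imsetP.
  - case/andP => /forallP hg /forallP he.
    exists [ffun s : S' => g (val s)].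
      by apply/familyP => s; rewrite ffunE; apply: hg.
    apply/ffunP => i; rewrite !ffunE /=.
    have cl : closed e [pred y | g y == g i].
      by move=> x y hxy; have := he x; move/forallP/(_ y); rewrite hxy /= => /eqP hh; rewrite !inE hh.
    by have := closed_connect cl (connect_root e i); rewrite !inE eqxx => /esym/eqP ->.
  - case=> f /familyP hf ->; apply/andP; split.
      by apply/forallP => i; rewrite ffunE -Croot; exact: (hf (exist (fun x : I => roots e x) _ (rr i))).
    apply/forallP => i; apply/forallP => j; apply/implyP => hij; rewrite !ffunE.
    have hr : fingraph.root e i = fingraph.root e j.
      by apply/eqP; rewrite root_connect // connect1.
    by apply/eqP; congr (f _); apply: val_inj.
rewrite setE card_in_imset; last first.
  move=> f1 f2 _ _ h; apply/ffunP => s.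
  have := congr1 (fun g : {ffun I -> T} => g (val s)) h; rewrite /= !ffunE.
  have -> : exist _ (fingraph.root e (val s)) (rr (val s)) = s.
    by apply: val_inj => /=; apply/eqP; exact: (valP s).
  done.
rewrite card_family (@foldr_const _ _ _ m) ?size_map; last by move=> s; apply: hm.
rewrite -enumT -cardT card_sig; congr (_ ^ _)%N.
by apply: eq_card => x; rewrite !inE andbT.
Qed.

Section Main.
Variables (I E : finType) (src tgt : E -> I).
Variables (R : finComUnitRingType) (pi : R) (alpha q : nat).
Hypothesis halpha : (1 <= alpha)%N.
Hypothesis hR : is_Oalpha pi alpha q.
Variable x : {ffun E -> R}.

Definition ve e := vl pi alpha (x e).

Lemma ve_le e : (ve e <= alpha)%N.
Proof. by case: (vl_spec pi alpha (x e)). Qed.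

Lemma edge_cond k e : (k <= alpha)%N ->
  ((q%:R : rat) ^- k < absv pi alpha q (x e)) = (ve e < k)%N.
Proof.
move=> hk; rewrite /absv /ve.
have hq := q_gt1 hR.
have hQ : (1 : rat) < q%:R by rewrite ltr1n.
have hQ0 : (0 : rat) < q%:R by apply: lt_trans hQ.
have [h0|h0] := eqVneq (x e) 0.
  rewrite h0 (vl0 hR); apply/idP/idP => [h|]; last by rewrite ltnNge hk.
  by move: h; rewrite ltNge ltW // invr_gt0 exprn_gt0.
rewrite ltf_pV2 ?posrE ?exprn_gt0 //.
exact: ltr_eXn2l.
Qed.

Definition gadj k := gamma_adj src tgt pi alpha q x k.

Lemma gadj_sym k : connect_sym (gadj k).
Proof.
apply: sym_connect_sym => i j; rewrite /gadj /gamma_adj.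
by apply: eq_existsb => e; rewrite orbC.
Qed.

Lemma gadjP k i j : (k <= alpha)%N -> reflect
  (exists e, (ve e < k)%N /\ ((src e = i /\ tgt e = j) \/ (src e = j /\ tgt e = i)))
  (gadj k i j).
Proof.
move=> hk; rewrite /gadj /gamma_adj; apply: (iffP existsP).
  move=> [e /andP[]]; rewrite edge_cond // => he h; exists e; split => //.
  by case/orP: h => /andP[/eqP -> /eqP ->]; [left|right].
move=> [e [he h]]; exists e; rewrite edge_cond // he /=.
by case: h => -[-> ->]; rewrite !eqxx ?orbT.
Qed.

Definition Sol j := [set g : {ffun I -> R} |
  [forall i, (rep pi j (g i) == g i) && (g i \is a GRing.unit)] &&
  [forall e, eqm pi (minn j (alpha - ve e)) (g (tgt e)) (g (src e))]].

Lemma card_Sol1 : #|Sol 1| = ((q - 1) ^ n_comp (gadj alpha) predT)%N.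
Proof.
rewrite -(card_U1 hR) -(@card_comp _ _ _ (fun _ => U1 pi)) //; last exact: gadj_sym.
apply: eq_card => g; rewrite !inE.
apply/andP/andP => -[/forallP h1 /forallP h2]; split.
- by apply/forallP => i; rewrite inE h1.
- apply/forallP => i; apply/forallP => j; apply/implyP => /gadjP -/(_ (leqnn _)) [e [he hij]].
  have : g (tgt e) = g (src e).
    have := h2 e; rewrite (_ : minn 1 (alpha - ve e) = 1) => [h|]; last first.
      by apply/minn_idPl; rewrite subn_gt0.
    by apply: canon_eq h; apply/eqP; [case/andP: (h1 (tgt e))|case/andP: (h1 (src e))].
  by case: hij => -[<- <-] ->.
- by apply/forallP => i; have := h1 i; rewrite inE.
- apply/forallP => e.
  have [hlt|hge] := ltnP (ve e) alpha.
    have := h2 (src e); move/forallP/(_ (tgt e)).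
    have -> : gadj alpha (src e) (tgt e) by apply/gadjP => //; exists e; split => //; left.
    by move=> /eqP ->; apply: eqm_refl.
  by rewrite (_ : alpha - ve e = 0)%N ?minn0 ?eqm0 //; apply/eqP; rewrite subn_eq0.
Qed.


Lemma card_Sol_step j : (1 <= j)%N -> (j < alpha)%N ->
  #|Sol j.+1| = (#|Sol j| * q ^ n_comp (gadj (alpha - j)) predT)%N.
Proof.
move=> hj1 hj.
apply: (card_fibers (f := fun g : {ffun I -> R} => [ffun i => rep pi j (g i)])).
- move=> g; rewrite !inE => /andP[/forallP h1 /forallP h2]; apply/andP; split.
    apply/forallP => i; rewrite !ffunE rep_rep eqxx /=.
    case/andP: (h1 i) => _ hu; apply: (unit_eqm1 hR hu).
    by apply: (eqm_le hj1); apply: rep_eqm.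
  apply/forallP => e; rewrite !ffunE.
  have h := h2 e.
  have hm : (minn j (alpha - ve e) <= minn j.+1 (alpha - ve e))%N.
    by rewrite leq_min geq_minr andbT (leq_trans (geq_minl _ _) (leqnSn _)).
  have hmj : (minn j (alpha - ve e) <= j)%N by apply: geq_minl.
  apply: (eqm_trans (b := g (src e))); last first.
    by apply: (eqm_le hmj); apply: rep_eqm.
  apply: (eqm_trans (b := g (tgt e))); last by apply: (eqm_le hm).
  by apply: (eqm_le hmj); apply: eqm_sym; apply: rep_eqm.
move=> h; rewrite inE => /andP[/forallP h1 /forallP h2].
have hh e : (ve e < alpha - j)%N -> h (tgt e) = h (src e).
  move=> he; have := h2 e; rewrite (_ : minn j (alpha - ve e) = j); last first.
    by apply/minn_idPl; apply: ltnW; rewrite ltn_subRL addnC -ltn_subRL.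
  move=> hts; apply: canon_eq hts; apply/eqP.
    by case/andP: (h1 (tgt e)).
  by case/andP: (h1 (src e)).
have hle : (alpha - j <= alpha)%N by apply: leq_subr.
rewrite -(@card_comp _ _ (gadj (alpha - j)) (fun i => Cset pi j (h i)) q (gadj_sym _)); first last.
- by move=> i; apply: (card_Cset halpha hR).
- move=> i i' /(gadjP _ _ hle) [e [he hii]].
  by case: hii => -[<- <-]; rewrite (hh e he).
apply: eq_card => g; rewrite !inE.
apply/andP/andP.
- move=> [/andP[/forallP g1 /forallP g2] /eqP hg].
  have hgi i : rep pi j (g i) = h i by rewrite -hg ffunE.
  split.
    apply/forallP => i; rewrite inE; case/andP: (g1 i) => -> _ /=.
    by rewrite -hgi; apply: rep_eqm.
  apply/forallP => i; apply/forallP => i'; apply/implyP => /(gadjP _ _ hle) [e [he hii]].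
  have : g (tgt e) = g (src e).
    have := g2 e; rewrite (_ : minn j.+1 (alpha - ve e) = j.+1); last first.
      by apply/minn_idPl; rewrite ltn_subRL addnC -ltn_subRL.
    move=> hts; apply: canon_eq hts; apply/eqP.
      by case/andP: (g1 (tgt e)).
    by case/andP: (g1 (src e)).
  by case: hii => -[<- <-] ->.
- move=> [/forallP c1 /forallP c2].
  have c1' i : (rep pi j.+1 (g i) == g i) && eqm pi j (g i) (h i).
    by have := c1 i; rewrite inE.
  split; last first.
    apply/eqP/ffunP => i; rewrite ffunE.
    case/andP: (c1' i) => _ hgi; rewrite (rep_eq hgi).
    by case/andP: (h1 i) => /eqP.
  apply/andP; split.
    apply/forallP => i; case/andP: (c1' i) => -> hgi /=.
    case/andP: (h1 i) => _ hu; apply: (unit_eqm1 hR hu).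
    by apply: (eqm_le hj1); apply: eqm_sym.
  apply/forallP => e.
  have [hlt|hge] := ltnP (ve e) (alpha - j).
    have := c2 (src e); move/forallP/(_ (tgt e)).
    have -> : gadj (alpha - j) (src e) (tgt e).
      by apply/(gadjP _ _ hle); exists e; split => //; left.
    by move=> /eqP ->; apply: eqm_refl.
  have hav : (alpha - ve e <= j)%N by rewrite leq_subCl.
  rewrite (_ : minn j.+1 (alpha - ve e) = alpha - ve e)%N; last first.
    by apply/minn_idPr; apply: (leq_trans hav).
  have h2e := h2 e; rewrite (_ : minn j (alpha - ve e) = alpha - ve e)%N in h2e; last first.
    by apply/minn_idPr.
  apply: (eqm_trans (b := h (src e))); last first.
    by apply: (eqm_le hav); apply: eqm_sym; case/andP: (c1' (src e)).
  apply: (eqm_trans (b := h (tgt e))) => //.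
  by apply: (eqm_le hav); case/andP: (c1' (tgt e)).
Qed.


Lemma card_Sol j : (1 <= j)%N -> (j <= alpha)%N ->
  #|Sol j| = ((q - 1) ^ n_comp (gadj alpha) predT *
      q ^ (\sum_(alpha - j + 1 <= k < alpha) n_comp (gadj k) predT))%N.
Proof.
elim: j => [//|j IH] _ hj.
have [j0|jpos] := eqVneq j 0.
  by rewrite j0 card_Sol1 big_geq ?expn0 ?muln1 // subnK.
  rewrite (card_Sol_step _ (hj : (j < alpha)%N)); last by rewrite lt0n.
  rewrite (IH _ (ltnW hj)); last by rewrite lt0n.
  rewrite -mulnA -expnD.
have hlt : (alpha - j < alpha)%N by rewrite ltn_subrL lt0n jpos.
congr (_ * q ^ _)%N.
rewrite [in RHS]addn1 (subnSK hj) (big_ltn hlt) addn1 addnC.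
by [].
Qed.

Lemma unit_cond (a b y : R) : b \is a GRing.unit ->
  (a * y * b^-1 == y) = ((a - b) * y == 0).
Proof.
move=> hb; apply/eqP/eqP => h.
  have e : a * y = y * b by rewrite -[in RHS]h divrK.
  by rewrite mulrBl e mulrC subrr.
by move/eqP: h; rewrite mulrBl subr_eq0 => /eqP ->; rewrite (mulrC b) mulrK.
Qed.

Lemma card_Aut : #|Aut_x src tgt x| = #|Sol alpha|.
Proof.
have inj : injective (fun g : {ffun I -> {unit R}} => [ffun i => val (g i)]).
  move=> g1 g2 h; apply/ffunP => i; apply: val_inj.
  by have := congr1 (fun g : {ffun I -> R} => g i) h; rewrite /= !ffunE.
rewrite -(card_imset _ inj); apply: eq_card => g'.
apply/imsetP/idP.
- move=> [g hg ->]; move: hg; rewrite !inE => /forallP hg; apply/andP; split.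
    by apply/forallP => i; rewrite ffunE (rep_alpha hR) eqxx /=; apply: valP.
  apply/forallP => e; rewrite !ffunE.
  rewrite (_ : minn alpha (alpha - ve e) = alpha - ve e)%N; last by apply/minn_idPr; apply: leq_subr.
  by rewrite /eqm -(ann halpha hR) -unit_cond ?hg //; apply: valP.
- rewrite inE => /andP[/forallP g1 /forallP g2].
  have hu i : g' i \is a GRing.unit by case/andP: (g1 i).
  exists [ffun i => (Sub (g' i) (hu i) : {unit R})].
    rewrite inE; apply/forallP => e; rewrite !ffunE /= unit_cond ?hu // (ann halpha hR).
    have := g2 e; rewrite (_ : minn alpha (alpha - ve e) = alpha - ve e)%N //.
    by apply/minn_idPr; apply: leq_subr.
  by apply/ffunP => i; rewrite !ffunE.
Qed.

End Main.

Theorem mainTheorem16 (I E : finType) (src tgt : E -> I)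
    (R : finComUnitRingType) (pi : R) (alpha q : nat)
    (halpha : (1 <= alpha)%N) (hR : is_Oalpha pi alpha q)
    (x : {ffun E -> R}) :
  #|Aut_x src tgt x| =
    ((q - 1) ^ (n_comp_gamma src tgt pi alpha q x alpha) *
     q ^ (\sum_(1 <= k < alpha) n_comp_gamma src tgt pi alpha q x k))%N.
Proof.
rewrite (@card_Aut I E src tgt R pi alpha q halpha hR x) (card_Sol src tgt halpha hR x halpha (leqnn alpha)) subnn add0n.
done.
Qed.
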